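(* Let $r$ be a prime power, $q=r^2$, and let $0\le k\le n\le q$ be integers. Then there exists a Hermitian self-orthogonal matrix-product code over $\mathbb{F}_q$ with parameters $[2n,n,d]_q$ where $d\ge\min\{2(n-k+1),k+1\}$.
   Context: For $a\in\mathbb{F}_q$, $\overline{a}:=a^r$. The Hermitian inner product on $\mathbb{F}_q^n$ is $\langle u,v\rangle_H=\sum_i u_i\overline{v_i}$; a linear code $C$ is Hermitian self-orthogonal if $C\subseteq C^{\perp_H}$. A code with parameters $[n,k,d]_q$ has length $n$, dimension $k$, minimum Hamming weight $d$. If $C_1,\dots,C_s$ are linear codes of length $m$ with generator matrices $G_i$ and $A=[a_{ij}]\in M_{s,l}(\mathbb{F}_q)$, the matrix-product code $[C_1,\dots,C_s]\cdot A$ is the linear code of length $ml$ generated by the block matrix whose $(i,j)$ block is $a_{ij}G_i$. *)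

(* Defs.v *)
From HB Require Import structures.
From mathcomp Require Import all_boot all_order all_algebra all_field.
Set Implicit Arguments. Unset Strict Implicit. Unset Printing Implicit Defensive.
Import GRing.Theory.
Local Open Scope ring_scope.

(* Linear codes of length N over F are given by generator matrices
   G : 'M[F]_(k, N); the code is the row space of G (mxalgebra). *)

(* Hermitian inner product <u,v>_H = sum_i u_i * v_i^r  (conjugation a ↦ a^r). *)
Definition herm_ip (F : fieldType) (r N : nat) (u v : 'rV[F]_N) : F :=
  \sum_(i < N) u 0 i * (v 0 i) ^+ r.

Definition herm_self_orth (F : fieldType) (r k N : nat) (G : 'M[F]_(k, N)) : Prop :=
  forall u v : 'rV[F]_N, (u <= G)%MS -> (v <= G)%MS -> herm_ip r u v = 0.

Definition wt (F : fieldType) (N : nat) (u : 'rV[F]_N) : nat :=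
  #|[set i : 'I_N | u 0 i != 0]|.

(* Matrix-product code [C_1,...,C_s]·A: generated by the block matrix whose
   (i,j) block is a_ij G_i; its length is \sum_(j < l) m = m*l. *)
Definition mpc (F : fieldType) (s l m : nat) (k : 'I_s -> nat)
    (G : forall i : 'I_s, 'M[F]_(k i, m)) (A : 'M[F]_(s, l))
    : 'M[F]_(\sum_(i < s) k i, \sum_(j < l) m) :=
  \mxblock_(i < s, j < l) (A i j *: G i).

(* Main.v *)
Require Import Defs.
From HB Require Import structures.
From mathcomp Require Import all_boot all_order all_algebra all_field all_fingroup all_solvable.
From mathcomp Require Import zify.
Set Implicit Arguments. Unset Strict Implicit. Unset Printing Implicit Defensive.
Import GRing.Theory.
Local Open Scope ring_scope.

Lemma big_split_rank (R : Type) (idx : R) (op : Monoid.com_law idx)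
  (N : nat) (q_ : 'I_N -> nat) (f : 'I_(\sum_(i < N) q_ i) -> R) :
  \big[op/idx]_s f s = \big[op/idx]_(j < N) \big[op/idx]_(l < q_ j) f (tagnat.Rank j l).
Proof.
rewrite sig_big_dep /= (reindex _ tagnat.sig_bij_on) /=.
by apply: eq_bigr => s _; rewrite tagnat.sig2K.
Qed.

Lemma submxrowE (T : Type) m (N : nat) (q_ : 'I_N -> nat) (A : 'M[T]_(m, \sum_(i < N) q_ i)) j i l :
  submxrow A j i l = A i (tagnat.Rank j l).
Proof. by rewrite mxE. Qed.

Lemma wtE (F : fieldType) N (u : 'rV[F]_N) : wt u = (\sum_(i < N) ((u ord0 i != 0%R) : nat))%N.
Proof. rewrite /wt cardsE -sum1_card big_mkcond /=. by apply: eq_bigr => i _; rewrite unfold_in; case: (u ord0 i != 0). Qed.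

Lemma wt_split (F : fieldType) (N : nat) (q_ : 'I_N -> nat) (u : 'rV[F]_(\sum_(i < N) q_ i)) :
  wt u = (\sum_(j < N) wt (submxrow u j))%N.
Proof.
rewrite wtE (big_split_rank (Monoid.ComLaw.clone _ _ addn _)) /=.
by apply: eq_bigr => j _; rewrite wtE; apply: eq_bigr => l _; rewrite submxrowE.
Qed.

Lemma herm_split (F : fieldType) r (N : nat) (q_ : 'I_N -> nat) (u v : 'rV[F]_(\sum_(i < N) q_ i)) :
  herm_ip r u v = \sum_(j < N) herm_ip r (submxrow u j) (submxrow v j).
Proof.
rewrite /herm_ip (big_split_rank (Monoid.ComLaw.clone _ _ +%R _)) /=.
by apply: eq_bigr => j _; apply: eq_bigr => l _; rewrite !submxrowE.
Qed.

Lemma mxrow_eq0 (F : fieldType) m (N : nat) (q_ : 'I_N -> nat) (u : 'M[F]_(m, \sum_(i < N) q_ i)) :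
  (forall j, submxrow u j = 0) -> u = 0.
Proof.
move=> H; rewrite -(submxrowK u) -(mxrow0 (q_ := q_)); apply: eq_mxrow => j; exact: H.
Qed.

Lemma mpc_row (F : fieldType) (s l m : nat) (k : 'I_s -> nat)
    (G : forall i : 'I_s, 'M[F]_(k i, m)) (A : 'M[F]_(s, l)) (w : 'rV[F]_(\sum_(i < s) k i)) j :
  submxrow (w *m mpc G A) j = \sum_i A i j *: (submxrow w i *m G i).
Proof.
rewrite -mul_submxrow /mpc submxrow_matrix -{1}(submxrowK w) mul_mxrow_mxcol.
by apply: eq_bigr => i _; rewrite scalemxAr.
Qed.

Section Herm.
Variables (F : fieldType) (r : nat).
Hypothesis r_gt0 : (0 < r)%N.
Hypothesis frD : forall x y : F, (x + y) ^+ r = x ^+ r + y ^+ r.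
Hypothesis frr : forall x : F, (x ^+ r) ^+ r = x.

Lemma fr0 : (0 : F) ^+ r = 0.
Proof. by rewrite expr0n eqn0Ngt r_gt0. Qed.

Lemma fr_sum (I : Type) (s : seq I) (P : pred I) (f : I -> F) :
  (\sum_(i <- s | P i) f i) ^+ r = \sum_(i <- s | P i) f i ^+ r.
Proof. exact: (big_morph (fun x : F => x ^+ r) frD fr0). Qed.

Definition conjv N (v : 'rV[F]_N) : 'rV[F]_N := map_mx (fun t => t ^+ r) v.

Lemma conjvM m N (w : 'rV[F]_m) (K : 'M[F]_(m, N)) :
  conjv (w *m K) = conjv w *m map_mx (fun t => t ^+ r) K.
Proof.
apply/rowP => j; rewrite !mxE fr_sum; apply: eq_bigr => i _. by rewrite !mxE exprMn.
Qed.

Lemma conjv_eq0 N (v : 'rV[F]_N) : (conjv v == 0) = (v == 0).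
Proof.
apply/eqP/eqP => [H|->]; apply/rowP => j.
  by have /rowP/(_ j) := H; rewrite !mxE => /eqP; rewrite expf_eq0 r_gt0 /= => /eqP.
by rewrite !mxE fr0.
Qed.

Lemma wt_conjv N (v : 'rV[F]_N) : wt (conjv v) = wt v.
Proof. by rewrite !wtE; apply: eq_bigr => i _; rewrite mxE expf_eq0 r_gt0. Qed.

Lemma hipDl N (u v w : 'rV[F]_N) : herm_ip r (u + v) w = herm_ip r u w + herm_ip r v w.
Proof. by rewrite /herm_ip -big_split; apply: eq_bigr => i _; rewrite mxE mulrDl. Qed.

Lemma hipZl N c (u w : 'rV[F]_N) : herm_ip r (c *: u) w = c * herm_ip r u w.
Proof. by rewrite /herm_ip mulr_sumr; apply: eq_bigr => i _; rewrite mxE mulrA. Qed.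

Lemma hipDr N (u v w : 'rV[F]_N) : herm_ip r u (v + w) = herm_ip r u v + herm_ip r u w.
Proof. by rewrite /herm_ip -big_split; apply: eq_bigr => i _; rewrite mxE frD mulrDr. Qed.

Lemma hipZr N c (u w : 'rV[F]_N) : herm_ip r u (c *: w) = c ^+ r * herm_ip r u w.
Proof.
by rewrite /herm_ip mulr_sumr; apply: eq_bigr => i _; rewrite mxE exprMn mulrCA.
Qed.

Lemma hipC N (u v : 'rV[F]_N) : herm_ip r v u = (herm_ip r u v) ^+ r.
Proof.
by rewrite /herm_ip fr_sum; apply: eq_bigr => i _; rewrite exprMn frr mulrC.
Qed.

Lemma hip_conj N (u v : 'rV[F]_N) : herm_ip r u v = (u *m (conjv v)^T) 0 0.
Proof. by rewrite /herm_ip mxE; apply: eq_bigr => i _; rewrite !mxE. Qed.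

End Herm.

Section RS.
Variables (F : fieldType) (n k : nat) (al : 'I_n -> F).
Hypothesis al_inj : injective al.
Hypothesis kn : (k <= n)%N.

Definition G0 : 'M[F]_(k, n) := \matrix_(i, j) al j ^+ i.

Definition wc (w : 'rV[F]_k) (i : nat) : F := oapp (fun o : 'I_k => w 0 o) 0 (insub i).

Lemma wcE w (i : 'I_k) : wc w i = w 0 i.
Proof. by rewrite /wc valK. Qed.

Lemma G0_eval (w : 'rV[F]_k) j : (w *m G0) 0 j = (\poly_(i < k) wc w i).[al j].
Proof. by rewrite !mxE horner_poly; apply: eq_bigr => i _; rewrite mxE wcE. Qed.

Lemma G0_inj (w : 'rV[F]_k) : w *m G0 = 0 -> w = 0.
Proof.
move=> H; set P := \poly_(i < k) wc w i.
have P0 : P = 0.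
  apply/eqP; apply: contraT => Pn0.
  have := max_poly_roots Pn0 (rs := [seq al j | j <- enum 'I_n]).
  rewrite size_map size_enum_ord.
  have -> : all (root P) [seq al j | j <- enum 'I_n].
    apply/allP => x /mapP [j _ ->]; rewrite /root -G0_eval H mxE //.
  rewrite map_inj_uniq ?enum_uniq //.
  move=> /(_ isT isT) H2; have H3 := size_poly k (wc w); rewrite -/P in H3; by have := leq_trans H2 (leq_trans H3 kn); rewrite ltnn.
apply/rowP => i; have := coef_poly k (wc w) i; rewrite -/P P0 coef0 ltn_ord.
by rewrite mxE wcE => ->.
Qed.

Lemma G0_free : row_free G0.
Proof.
rewrite -kermx_eq0; apply/eqP/row_matrixP => i; rewrite row0; apply: G0_inj.
by apply/sub_kermxP; exact: row_sub.
Qed.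

Lemma G0_rank : \rank G0 = k.
Proof. by have := G0_free; rewrite /row_free => /eqP. Qed.

Lemma G0_dist (w : 'rV[F]_k) : w *m G0 != 0 -> (n - k + 1 <= wt (w *m G0))%N.
Proof.
move=> xn0; set x := w *m G0; set P := \poly_(i < k) wc w i.
have Pn0 : P != 0.
  apply: contra xn0 => /eqP P0; apply/eqP/rowP => j; rewrite [LHS]G0_eval -/P P0 horner0 mxE //.
set Z := [pred j | x 0 j == 0].
have := max_poly_roots Pn0 (rs := [seq al j | j <- enum Z]).
rewrite size_map -cardE map_inj_uniq ?enum_uniq //.
have -> : all (root P) [seq al j | j <- enum Z].
  apply/allP => y /mapP [j]; rewrite mem_enum => Zj ->; rewrite /root -G0_eval.
  exact: Zj.
move=> /(_ isT isT) => H2; have := size_poly k (wc w); rewrite -/P.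
have := cardC Z; rewrite card_ord.
have -> : wt x = #|[predC Z]| by rewrite /wt cardsE.
move=> H3 H4; move: H2 H3 H4 kn; move: (size P) (#|Z|) (#|[predC Z]|) => a b c; lia.
Qed.

Lemma dual_dist (z : 'rV[F]_n) : z *m G0^T = 0 -> z != 0 -> (k + 1 <= wt z)%N.
Proof.
move=> Hz zn0; rewrite leqNgt; apply/negP => Hw.
set S := [set j | z 0 j != 0].
have [j0 j0S] : exists j0, j0 \in S.
  apply/existsP; apply: contraR zn0 => /existsPn H; apply/eqP/rowP => j.
  by have := H j; rewrite inE negbK mxE => /eqP.
set s := [seq al l | l <- enum (S :\ j0)].
set P := \prod_(t <- s) ('X - t%:P).
have sP : (size P <= k)%N.
  rewrite /P size_prod_XsubC size_map -cardE.
  have := cardsD1 j0 S; rewrite j0S; rewrite /wt in Hw; rewrite -/S in Hw; lia.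
have E : \sum_j P.[al j] * z 0 j = 0.
  transitivity (\sum_(i < k) P`_i * (z *m G0^T) 0 i).
    under eq_bigr => j _ do rewrite (horner_coef_wide _ sP) mulr_suml.
    rewrite exchange_big /=; apply: eq_bigr => i _; rewrite !mxE mulr_sumr.
    by apply: eq_bigr => j _; rewrite !mxE mulrA mulrAC.
  by rewrite Hz; apply: big1 => i _; rewrite mxE mulr0.
move: E; rewrite (bigD1 j0) //= big1 ?addr0.
  apply/eqP; rewrite mulf_eq0 negb_or; apply/andP; split.
    rewrite -/(root P _) root_prod_XsubC; apply/mapP => -[l].
    by rewrite mem_enum in_setD1 => /andP [/eqP + _] /al_inj /esym.
  by move: j0S; rewrite inE.
move=> j jj0; case: (boolP (j \in S)) => jS.
  have : root P (al j) by rewrite root_prod_XsubC; apply: map_f; rewrite mem_enum in_setD1 jj0.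
  by rewrite /root => /eqP ->; rewrite mul0r.
by move: jS; rewrite inE negbK => /eqP ->; rewrite mulr0.
Qed.

End RS.

Lemma exists_ab (F : finFieldType) (r : nat) : (1 < r)%N -> #|F| = (r ^ 2)%N ->
  exists a b : F, a ^+ r.+1 = -1 /\ b ^+ r.+1 = -1 /\ a != b.
Proof.
move=> r1 Hq.
set m := (#|F|).-1.
have m_gt0 : (0 < m)%N by rewrite /m Hq; nia.
set rs := enum (predC1 (0 : F)).
have : has m.-primitive_root rs.
  apply: has_prim_root => //.
  - apply/allP => x; rewrite mem_enum /= => xn0; apply/unity_rootP.
    have := expf_card x; have F0 : (0 < #|F|)%N by rewrite Hq; nia.
    rewrite -(prednK F0) exprS -/m.
    by move=> H; apply: (mulfI xn0); rewrite mulr1.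
  - exact: enum_uniq.
  - by rewrite -cardE cardC1.
move=> /hasP [g _ pg].
have gm : g ^+ m = 1 by apply: prim_expr_order.
set z := g ^+ (r - 1).
have z1 : z ^+ r.+1 = 1.
  by rewrite /z -exprM; have -> : ((r - 1) * r.+1 = m)%N by rewrite /m Hq; nia.
have zn1 : z != 1.
  rewrite /z -(expr0 g) (eq_prim_root_expr pg) mod0n modn_small; last by rewrite /m Hq; nia.
  by rewrite subn_eq0 -ltnNge.
have [a [Ha an0]] : exists a : F, a ^+ r.+1 = -1 /\ a != 0.
  case: (boolP (odd r)) => [ro|re].
    set t := r./2.
    have rt : r = t.*2.+1 by rewrite -[r in LHS]odd_double_half ro.
    exists (g ^+ t).
    have H : (g ^+ t) ^+ r.+1 = -1.
      rewrite -exprM; set h := g ^+ _.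
      have h2 : h ^+ 2 = 1 by rewrite /h -exprM; have -> : (t * r.+1 * 2 = m)%N by rewrite /m Hq rt; nia.
      have hn1 : h != 1.
        rewrite /h -(expr0 g) (eq_prim_root_expr pg) mod0n modn_small; last by rewrite /m Hq rt; nia.
        rewrite rt; nia.
      have : (h - 1) * (h + 1) = 0 by rewrite mulrDr mulr1 mulrBl mul1r -expr2 h2 addrA subrK subrr.
      move/eqP; rewrite mulf_eq0 subr_eq0 (negbTE hn1) /= addr_eq0 => /eqP //.
    by split=> //; apply/eqP => H0; move: H; rewrite H0 expr0n /= => /eqP; rewrite eq_sym oppr_eq0 oner_eq0.
  exists (-1); split; last by rewrite oppr_eq0 oner_eq0.
  by rewrite -signr_odd /= (negbTE re) expr1.
exists a, (a * z); split=> //; split; first by rewrite exprMn Ha z1 mulr1.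
apply: contra zn1 => /eqP H; apply/eqP; apply: (mulfI an0); rewrite mulr1 -H //.
Qed.

Unset Implicit Arguments.
Theorem corollary5p3 (F : finFieldType) (r p e : nat) :
  prime p -> (0 < e)%N -> r = (p ^ e)%N -> #|F| = (r ^ 2)%N ->
  forall k n : nat, (k <= n <= #|F|)%N ->
  exists (kk : 'I_2 -> nat) (G : forall i : 'I_2, 'M[F]_(kk i, n)) (A : 'M[F]_2),
    \rank (mpc G A) = n /\
    herm_self_orth r (mpc G A) /\
    (forall u : 'rV[F]_(\sum_(j < 2) n),
        (u <= mpc G A)%MS -> u != 0 ->
        (minn (2 * (n - k + 1)) (k + 1) <= wt u)%N).
Proof.
move=> Hp He Er Hq k n /andP [kn nq].
have p1 := prime_gt1 Hp.
have r1 : (1 < r)%N.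
  rewrite Er -(prednK He) expnS; apply: (leq_trans p1); apply: leq_pmulr.
  by rewrite expn_gt0 ltnW.
have r0 : (0 < r)%N by apply: ltnW.
have chp : p \in [pchar F].
  by apply: (card_finPcharP (n := (e * 2)%N)) => //; rewrite Hq Er expnM.
have frD : forall x y : F, (x + y) ^+ r = x ^+ r + y ^+ r.
  move=> x y; rewrite Er; elim: (e) => [|e' IH]; first by rewrite expn0 !expr1.
  by rewrite expnSr !exprM IH -!(pFrobenius_autE chp) rmorphD.
have frr : forall x : F, (x ^+ r) ^+ r = x.
  by move=> x; rewrite -exprM mulnn -Hq expf_card.
have [a [b [Ha [Hb ab]]]] := exists_ab r1 Hq.
have an0 : a != 0.
  apply/eqP => a0; move: Ha; rewrite a0 expr0n /= => /eqP; rewrite eq_sym oppr_eq0 oner_eq0.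
  by [].
pose al := fun j : 'I_n => (enum_val (widen_ord nq j) : F).
have al_inj : injective al.
  by move=> i j /enum_val_inj H; apply/val_inj; exact: (congr1 val H).
pose G0' := G0 k al.
pose k' := \rank (kermx G0'^T).
pose K := row_base (kermx G0'^T).
pose G1 := map_mx (fun t : F => t ^+ r) K.
pose kk := fun i : 'I_2 => if val i == 0%N then k else k'.
pose G := fun i : 'I_2 => match val i == 0%N as c return 'M[F]_(if c then k else k', n) with
  | true => G0' | false => G1 end.
pose A : 'M[F]_2 := \matrix_(i, j) if val j == 0%N then 1 else (if val i == 0%N then a else b).
exists kk, G, A.
set M := mpc G A.
pose i1 : 'I_2 := lift ord0 ord0.
have blk : forall w : 'rV_(\sum_(i < 2) kk i),
   submxrow (w *m M) ord0 = submxrow w ord0 *m G0' + submxrow w i1 *m G1 /\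
   submxrow (w *m M) i1 = a *: (submxrow w ord0 *m G0') + b *: (submxrow w i1 *m G1).
  move=> w; rewrite !mpc_row !big_ord_recl !big_ord0 !addr0 /A !mxE /=.
  by rewrite !scale1r.
have KK : map_mx (fun t : F => t ^+ r) G1 = K.
  by apply/matrixP => i j; rewrite !mxE frr.
have conjy : forall w1 : 'rV_k', conjv r (w1 *m G1) = conjv r w1 *m K.
  by move=> w1; rewrite conjvM // KK.
have inker : forall w1 : 'rV_k', conjv r (w1 *m G1) *m G0'^T = 0.
  move=> w1; apply/sub_kermxP; rewrite conjy.
  by rewrite (submx_trans (submxMl _ _)) // eq_row_base.
have orth : forall (w0 : 'rV_k) (w1 : 'rV_k'), herm_ip r (w0 *m G0') (w1 *m G1) = 0.
  move=> w0 w1; rewrite hip_conj -mulmxA.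
  have -> : G0' *m (conjv r (w1 *m G1))^T = (conjv r (w1 *m G1) *m G0'^T)^T.
    by rewrite trmx_mul trmxK.
  by rewrite inker trmx0 mulmx0 mxE.
have G1inj : forall w1 : 'rV_k', w1 *m G1 = 0 -> w1 = 0.
  move=> w1 H; have := conjy w1; rewrite H.
  have -> : conjv r (0 : 'rV[F]_n) = 0 by apply/rowP => j; rewrite !mxE expr0n eqn0Ngt r0.
  move=> /esym H2; have : conjv r w1 = 0.
    apply: (row_free_inj (row_base_free (kermx G0'^T))); rewrite mul0mx; exact: H2.
  by move/eqP; rewrite (conjv_eq0 r0) => /eqP.
have ord2 : forall j : 'I_2, j = ord0 \/ j = i1.
  by case=> [[|[|j]] Hj]; [left; apply: val_inj | right; apply: val_inj | ].
have Minj : forall w : 'rV_(\sum_(i < 2) kk i), w *m M = 0 -> w = 0.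
  move=> w H; have [H0 H1] := blk w; rewrite H in H0 H1; rewrite submxrow0 in H0; rewrite submxrow0 in H1.
  set x := submxrow w ord0 *m G0' in H0 H1.
  set y := submxrow w i1 *m G1 in H0 H1.
  have y0 : y = 0.
    have : (a - b) *: y = 0.
      have -> : (a - b) *: y = a *: (x + y) - (a *: x + b *: y).
        by rewrite scalerBl scalerDr opprD addrACA subrr add0r.
      by rewrite -H0 -H1 scaler0 subrr.
    by move/eqP; rewrite scaler_eq0 subr_eq0 (negbTE ab) /= => /eqP.
  have x0 : x = 0 by move: H0; rewrite y0 addr0.
  apply: mxrow_eq0 => j; case: (ord2 j) => ->.
    exact: (G0_inj al_inj kn x0).
  exact: G1inj y0.
have rkM : \rank M = n.
  have : row_free M.
    rewrite -kermx_eq0; apply/eqP/row_matrixP => i; rewrite row0; apply: Minj.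
    by apply/sub_kermxP; exact: row_sub.
  rewrite /row_free => /eqP ->.
  rewrite big_ord_recl big_ord1 /kk /= /k' mxrank_ker mxrank_tr (G0_rank al_inj kn).
  lia.
split=> //; split.
  move=> u v /submxP [wu ->] /submxP [wv ->].
  have sum2 : forall f : 'I_2 -> F, \sum_(j < 2) f j = f ord0 + f i1.
    by move=> f; rewrite big_ord_recl big_ord1.
  rewrite herm_split sum2.
  have [U0 U1] := blk wu; have [V0 V1] := blk wv.
  rewrite -/i1 U0 U1 V0 V1.
  set x := submxrow wu ord0 *m G0'; set y := submxrow wu i1 *m G1.
  set x' := submxrow wv ord0 *m G0'; set y' := submxrow wv i1 *m G1.
  have o1 : herm_ip r x y' = 0 by apply: orth.
  have o2 : herm_ip r y x' = 0.
    by rewrite (hipC r0 frD frr) orth (fr0 F r0).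
  rewrite !(hipDl, hipDr frD, hipZl, hipZr) o1 o2.
  rewrite !mulr0 !addr0 !add0r !mulrA -!exprS Ha Hb !mulN1r.
  by rewrite addrACA !subrr addr0.
move=> u /submxP [w ->] un0.
have [U0 U1] := blk w.
rewrite wt_split (big_ord_recl 1 (fun j => wt (submxrow (w *m M) j))) big_ord1.
rewrite -/i1 U0 U1.
set x := submxrow w ord0 *m G0'; set y := submxrow w i1 *m G1.
case: (eqVneq y 0) => [y0|yn0].
  rewrite y0 scaler0 !addr0.
  have xn0 : x != 0.
    apply: contra un0 => /eqP x0; apply/eqP; apply: mxrow_eq0 => j.
    by case: (ord2 j) => ->; [rewrite U0 | rewrite U1]; rewrite -/x -/y x0 y0 ?scaler0 addr0.
  have wax : wt (a *: x) = wt x.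
    by rewrite !wtE; apply: eq_bigr => j _; rewrite mxE mulf_eq0 negb_or an0.
  rewrite wax; have := G0_dist al_inj kn xn0.
  move=> H; apply: leq_trans (geq_minl _ _) _; move: H; move: (wt x) => t; lia.
have cyn0 : conjv r y != 0 by rewrite (conjv_eq0 r0).
have := dual_dist al_inj kn (inker _) cyn0; rewrite (wt_conjv r0) => Hy.
apply: leq_trans (geq_minr _ _) _; apply: leq_trans Hy _.
rewrite !wtE -big_split /=; apply: leq_sum => j _.
case: (eqVneq (y ord0 j) 0) => [_|yj] //.
case: (eqVneq ((x + y) ord0 j) 0) => [c0|]; last by case: (_ != 0).
rewrite add0n; case: (eqVneq ((a *: x + b *: y) ord0 j) 0) => [c1|] //.
exfalso; clearbody x y; move: c0 c1; rewrite !mxE => c0.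
have -> : x ord0 j = - y ord0 j by apply/eqP; rewrite -subr_eq0 opprK c0.
rewrite mulrN addrC -mulrBl => /eqP; rewrite mulf_eq0 (negbTE yj) orbF subr_eq0 eq_sym.
by rewrite (negbTE ab).
Qed.
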